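(* Let $\xi\in(0,1)$, let $\lambda(x)=\sum_{i\ge2}\lambda_ix^{i-1}$ and $\rho(x)=\sum_{j\ge2}\rho_jx^{j-1}$ be degree distributions, let $a$ be the average right degree ($1/a=\int_0^1\rho(x)dx$), and suppose the maximal degree of $\lambda$ is at most $k_va$ and the maximal degree of $\rho$ is at most $k_ca$, for constants $k_v,k_c$. Then for every $x\in(0,\xi]$, $$\left|\frac{d^2}{dx^2}\bigl[\lambda(1-\rho(1-x))\bigr]\right|\le\frac{k_v^2k_c^2\rho(1-x)^2a^4}{(1-\xi)^2}+\frac{k_vk_c^2\rho(1-x)a^3}{(1-\xi)^2}.$$
   Context: A degree distribution is a polynomial $\gamma(x)=\sum_{k\ge2}\gamma_kx^{k-1}$ with $\gamma_k\ge0$ and $\sum_k\gamma_k=1$; its maximal degree is the largest $k$ with $\gamma_k\ne0$. *)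

(* Defs.v *)
From mathcomp Require Import all_boot all_order all_algebra.
Set Implicit Arguments. Unset Strict Implicit. Unset Printing Implicit Defensive.
Import Order.TTheory GRing.Theory Num.Theory.
Local Open Scope ring_scope.

(* gamma(x) = \sum_{k>=2} gamma_k x^(k-1): the coefficient of x^i in the
   polynomial p is gamma_{i+1}.  No constant term (k >= 2), nonnegative
   coefficients, coefficients summing to 1 (i.e. p.[1] = 1). *)
Definition degree_distribution (R : realFieldType) (p : {poly R}) : Prop :=
  p`_0 = 0 /\ (forall i, 0 <= p`_i) /\ p.[1] = 1.

(* maximal degree = largest k with gamma_k <> 0 = (degree of p) + 1 = size p *)
Definition max_degree (R : realFieldType) (p : {poly R}) : nat := size p.

Definition poly_integral01 (R : realFieldType) (p : {poly R}) : R :=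
  \sum_(i < size p) p`_i / (i.+1)%:R.

(* Main.v *)
Require Import Defs.
From mathcomp Require Import all_boot all_order all_algebra.
From mathcomp Require Import ring lra.
Import Order.TTheory GRing.Theory Num.Theory.
Local Open Scope ring_scope.

Section H.
Context {R : realFieldType}.
Implicit Types (p : {poly R}) (y : R).

Lemma size_der_le p : (size p^`() <= size p)%N.
Proof. have [->|p0] := eqVneq p 0; first by rewrite deriv0. exact/ltnW/lt_size_deriv. Qed.

Lemma nn_der p : (forall i, 0 <= p`_i) -> forall i, 0 <= p^`()`_i.
Proof. by move=> h i; rewrite coef_deriv mulrn_wge0. Qed.

Lemma nn_ev p y : (forall i, 0 <= p`_i) -> 0 <= y -> 0 <= p.[y].
Proof. move=> h y0; rewrite horner_coef sumr_ge0 // => i _; by rewrite mulr_ge0 ?exprn_ge0. Qed.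

Lemma mono_ev p y : (forall i, 0 <= p`_i) -> 0 <= y -> y <= 1 -> p.[y] <= p.[1].
Proof.
move=> h y0 y1; rewrite !horner_coef; apply: ler_sum => i _.
rewrite expr1n mulr1 ler_piMr //; exact: exprn_ile1.
Qed.

Lemma der_bound p y : (forall i, 0 <= p`_i) -> 0 <= y ->
  y * p^`().[y] <= (size p)%:R * p.[y].
Proof.
move=> h y0.
rewrite (horner_coef_wide _ (size_der_le p)) (@horner_coef_wide _ (size p).+1) //.
rewrite big_ord_recl /= mulr_sumr mulrDr; rewrite -[X in X <= _]add0r.
apply: lerD; first by rewrite mulr_ge0 ?ler0n // mulr_ge0 ?exprn_ge0.
rewrite mulr_sumr; apply: ler_sum => i _.
rewrite coef_deriv /bump /= add1n exprS.
rewrite -[p`_i.+1 *+ _]mulr_natr.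
have -> : y * (p`_i.+1 * (i.+1)%:R * y ^+ i) = (i.+1)%:R * (p`_i.+1 * (y * y ^+ i)) by ring.
apply: ler_wpM2r; first by rewrite mulr_ge0 ?mulr_ge0 ?exprn_ge0.
rewrite ler_nat; exact: ltn_ord.

Qed.
End H.
Arguments nn_der {R p}.
Arguments nn_ev {R p y}.
Arguments mono_ev {R p y}.
Arguments der_bound {R p y}.

Theorem lemma3 (R : realFieldType) (xi : R) (lam rho : {poly R}) (a kv kc : R) :
  0 < xi -> xi < 1 ->
  degree_distribution lam -> degree_distribution rho ->
  1 / a = poly_integral01 rho ->
  (max_degree lam)%:R <= kv * a ->
  (max_degree rho)%:R <= kc * a ->
  forall x : R, 0 < x -> x <= xi ->
  `| ((lam \Po (1 - (rho \Po (1 - 'X)))) ^`(2)).[x] |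
    <= kv ^+ 2 * kc ^+ 2 * rho.[1 - x] ^+ 2 * a ^+ 4 / (1 - xi) ^+ 2
       + kv * kc ^+ 2 * rho.[1 - x] * a ^+ 3 / (1 - xi) ^+ 2.
Proof.
move=> xi0 xi1 [_ [hl l1]] [_ [hr r1]] _ hL hK x x0 xxi.
rewrite /max_degree in hL hK.
have -> : forall p : {poly R}, p^`(2) = p^`()^`() by [].
set y := 1 - x.
have dX : (1 - 'X : {poly R})^`() = -1 by rewrite derivB derivC derivX sub0r.
have e0 : forall p : {poly R}, (p \Po (1 - 'X)).[x] = p.[y].
  by move=> p; rewrite horner_comp !hornerE.
have e1 : forall p : {poly R}, (p \Po (1 - 'X))^`().[x] = - p^`().[y].
  by move=> p; rewrite deriv_comp dX hornerM e0 hornerN hornerC mulrN1.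
have e2 : forall p : {poly R}, (p \Po (1 - 'X))^`()^`().[x] = p^`()^`().[y].
  move=> p; rewrite deriv_comp dX mulrN1 derivN deriv_comp dX hornerN hornerM.
  by rewrite e0 hornerN hornerC mulrN1 opprK.
rewrite deriv_comp derivM deriv_comp derivB derivC sub0r.
rewrite hornerD !hornerM hornerN !horner_comp hornerD hornerN hornerC e0 e1 derivN hornerN e2 !opprK.
set u := 1 - rho.[y].
have y0 : 0 < y by rewrite /y; lra.
have y1 : y <= 1 by rewrite /y; lra.
have ep : 0 < 1 - xi by lra.
have yxi : 1 - xi <= y by rewrite /y; lra.
have hr' := nn_der hr. have hr'' := nn_der hr'.
have hl' := nn_der hl. have hl'' := nn_der hl'.
have P0 : 0 <= rho.[y] by apply: nn_ev => //; lra.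
have P1 : rho.[y] <= 1 by rewrite -r1; apply: mono_ev => //; lra.
have u0 : 0 <= u by rewrite /u; lra.
have u1 : u <= 1 by rewrite /u; lra.
have A0 : 0 <= lam^`()^`().[u] by apply: nn_ev.
have B0 : 0 <= lam^`().[u] by apply: nn_ev.
have R10 : 0 <= rho^`().[y] by apply: nn_ev => //; lra.
have R20 : 0 <= rho^`()^`().[y] by apply: nn_ev => //; lra.
have L0 : 0 <= (size lam)%:R :> R by rewrite ler0n.
have K0 : 0 <= (size rho)%:R :> R by rewrite ler0n.
have B1 : lam^`().[1] <= (size lam)%:R.
  have := der_bound hl (@ler01 R); by rewrite l1 mul1r mulr1.
have hB : lam^`().[u] <= (size lam)%:R by apply: le_trans B1; apply: mono_ev.
have hA : lam^`()^`().[u] <= (size lam)%:R * (size lam)%:R.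
  apply: (le_trans (mono_ev hl'' u0 u1)).
  have := der_bound hl' (@ler01 R); rewrite mul1r => h; apply: (le_trans h).
  apply: ler_pM => //. all: try (by apply: nn_ev). all: try (by rewrite ler_nat size_der_le).
have h1 : y * rho^`().[y] <= (size rho)%:R * rho.[y] by apply: der_bound => //; lra.
have h2 : y * rho^`()^`().[y] <= (size rho)%:R * rho^`().[y].
  apply: (le_trans (der_bound hr' (ltW y0))).
  by apply: ler_wpM2r => //; rewrite ler_nat size_der_le.
set A := lam^`()^`().[u] in A0 hA *. set B := lam^`().[u] in B0 hB *.
set r1v := rho^`().[y] in R10 h1 h2 *. set r2v := rho^`()^`().[y] in R20 h2 *.
set P := rho.[y] in P0 P1 h1 *.
set L := (size lam)%:R in L0 hA hB hL. set K := (size rho)%:R in K0 h1 h2 hK.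
have hr1 : r1v <= (kc * a) * P / (1 - xi).
  rewrite ler_pdivlMr //; apply: le_trans (_ : y * r1v <= _).
    by rewrite mulrC; apply: ler_wpM2r.
  apply: le_trans h1 _; exact: ler_wpM2r.
have hr2 : r2v <= (kc * a) ^+ 2 * P / (1 - xi) ^+ 2.
  rewrite ler_pdivlMr ?exprn_gt0 //.
  have : y * y * r2v <= K * K * P.
    rewrite -mulrA; apply: le_trans (_ : y * (K * r1v) <= _).
      by apply: ler_wpM2l => //; lra.
    by rewrite mulrCA -mulrA; apply: ler_wpM2l.
  have : (1 - xi) ^+ 2 * r2v <= y * y * r2v.
    apply: ler_wpM2r => //; rewrite expr2; apply: ler_pM => //; lra.
  have : K * K * P <= (kc * a) ^+ 2 * P.
    apply: ler_wpM2r => //; rewrite expr2; apply: ler_pM => //.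
  rewrite mulrC; lra.
have -> : kv ^+ 2 * kc ^+ 2 * P ^+ 2 * a ^+ 4 / (1 - xi) ^+ 2 +
  kv * kc ^+ 2 * P * a ^+ 3 / (1 - xi) ^+ 2 =
  ((kv * a) * (kv * a)) * ((kc * a) * P / (1 - xi)) * ((kc * a) * P / (1 - xi))
  + (kv * a) * ((kc * a) ^+ 2 * P / (1 - xi) ^+ 2).
  by field; rewrite gt_eqF.
apply: le_trans (ler_normD _ _) _.
rewrite !normrM normrN !ger0_norm //.
apply: lerD.
  apply: ler_pM; [by rewrite mulr_ge0 | by [] | | by []].
    apply: ler_pM; [by [] | by [] | | by []].
    apply: le_trans hA _; apply: ler_pM => //.
apply: ler_pM => //.
exact: le_trans hB hL.
Qed.
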